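(* Let $K$ be a field, let $R_1,\dots,R_m$ be disjoint nonempty sets with $\bigcup_{k=1}^m R_k=\{1,\dots,n\}$, and let $\vec a_{0,1},\dots,\vec a_{0,n},\vec a_{1,1},\dots,\vec a_{1,n}\in K^{n+1}$ satisfy: for every $\vec s=(s_1,\dots,s_m)\in\{0,1\}^m$ the set $A_{\vec s}=\bigcup_{k=1}^m\{\vec a_{s_k,i}: i\in R_k\}$ is linearly independent, and every vector $\vec a_{s,i}$ ($s\in\{0,1\}$, $i\in\{1,\dots,n\}$) with $\vec a_{s,i}\notin A_{\vec s}$ is not in $\mathrm{span}(A_{\vec s})$. For $\vec s\in\{0,1\}^m$ let $\vec x_{\vec s}$ be the solution of the equations $\hat a_{s_k,i}=0$ for all $i\in R_k$, $k\in\{1,\dots,m\}$. If $\vec s\neq\vec r$, then $\vec x_{\vec s}\neq\vec x_{\vec r}$.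
   Context: For $\vec a\in K^{n+1}$, $\hat a$ denotes the affine-linear function $\hat a(x_1,\dots,x_n)=\vec a\cdot\vec x$ with $\vec x=(x_1,\dots,x_n,1)$. *)

(* Defs.v *)
From HB Require Import structures.
From mathcomp Require Import all_boot all_order all_algebra.
Set Implicit Arguments. Unset Strict Implicit. Unset Printing Implicit Defensive.
Import Order.TTheory GRing.Theory Num.Theory.
Local Open Scope ring_scope.

(* Vectors of K^{n+1} are row vectors 'rV[K]_(n.+1); the last coordinate
   (ord_max) is the constant coefficient.  A point of K^n is 'rV[K]_n. *)

Definition ahat (K : fieldType) (n : nat) (a : 'rV[K]_(n.+1)) (x : 'rV[K]_n) : K :=
  \sum_(j < n) a 0 (widen_ord (leqnSn n) j) * x 0 j + a 0 ord_max.

Definition family_lin_indep (K : fieldType) (n m : nat) (R : 'I_m -> {set 'I_n})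
  (a : bool -> 'I_n -> 'rV[K]_(n.+1)) (s : {ffun 'I_m -> bool}) : Prop :=
  forall c : 'I_n -> K,
    \sum_(k < m) \sum_(i in R k) c i *: a (s k) i = 0 -> forall i, c i = 0.

Definition in_span_family (K : fieldType) (n m : nat) (R : 'I_m -> {set 'I_n})
  (a : bool -> 'I_n -> 'rV[K]_(n.+1)) (s : {ffun 'I_m -> bool}) (v : 'rV[K]_(n.+1)) : Prop :=
  exists c : 'I_n -> K, v = \sum_(k < m) \sum_(i in R k) c i *: a (s k) i.

Definition solves (K : fieldType) (n m : nat) (R : 'I_m -> {set 'I_n})
  (a : bool -> 'I_n -> 'rV[K]_(n.+1)) (s : {ffun 'I_m -> bool}) (x : 'rV[K]_n) : Prop :=
  forall k : 'I_m, forall i, i \in R k -> ahat (a (s k) i) x = 0.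

(* Main.v *)
Require Import Defs.
From HB Require Import structures.
From mathcomp Require Import all_boot all_order all_algebra.
Import Order.TTheory GRing.Theory Num.Theory.
Local Open Scope ring_scope.

Section Aux.
Variables (K : fieldType) (n : nat) (x : 'rV[K]_n).

Definition xv : 'cV[K]_(n.+1) :=
  \col_(j < n.+1) (if unlift ord_max j is Some j' then x 0 j' else 1).

Lemma ahatE (w : 'rV[K]_(n.+1)) : (w *m xv) 0 0 = ahat w x.
Proof.
rewrite !mxE big_ord_recr /= /ahat !mxE unlift_none mulr1; congr (_ + _).
apply: eq_bigr => j _; rewrite !mxE.
have -> : widen_ord (leqnSn n) j = lift ord_max j by apply/val_inj; rewrite /= /bump leqNgt ltn_ord.
by rewrite liftK.
Qed.

Lemma xv_neq0 : xv != 0.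
Proof.
apply/eqP => /matrixP /(_ ord_max 0); rewrite !mxE unlift_none => /eqP.
by rewrite oner_eq0.
Qed.
End Aux.
Arguments xv {K n}.
Arguments xv_neq0 {K n}.
Arguments ahatE {K n}.

Theorem lemma6 (K : fieldType) (n m : nat) (R : 'I_m -> {set 'I_n})
  (a : bool -> 'I_n -> 'rV[K]_(n.+1))
  (HRne : forall k, R k != set0)
  (HRdisj : forall k l, k != l -> [disjoint R k & R l])
  (HRcov : \bigcup_(k < m) R k = [set: 'I_n])
  (Hindep : forall s : {ffun 'I_m -> bool}, family_lin_indep R a s)
  (Hspan : forall (s : {ffun 'I_m -> bool}) (k : 'I_m) (i : 'I_n) (t : bool),
      i \in R k -> t != s k -> ~ in_span_family R a s (a t i))
  (s r : {ffun 'I_m -> bool}) (xs xr : 'rV[K]_n) :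
  solves R a s xs -> solves R a r xr -> s != r -> xs != xr.
Proof.
move=> Hs Hr Hsr; apply/negP => /eqP Hx; subst xr.
have [k0 Hk0] : exists k, s k != r k.
  case: (pickP (fun k => s k != r k)) => [k0 Hk0 | H]; first by exists k0.
  by move/negP: Hsr; case; apply/eqP/ffunP => k; move: (H k) => /negbFE/eqP.
have [i0 Hi0] : exists i, i \in R k0 by apply/set0Pn.
pose kof (i : 'I_n) := odflt k0 [pick k | i \in R k].
have kofP : forall i k, (i \in R k) = (kof i == k).
  move=> i k; rewrite /kof; case: pickP => [k' Hk' | H] /=.
    apply/idP/eqP => [Hik | Hkk]; last by rewrite -Hkk.
    apply/eqP; apply/negP => /negP Hne.
    by move: (HRdisj _ _ Hne) => /disjointFr /(_ Hk'); rewrite Hik.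
  have : i \in \bigcup_(k < m) R k by rewrite HRcov inE.
  by case/bigcupP => k' _; rewrite H.
have sumE : forall (F : 'I_m -> 'I_n -> 'rV[K]_(n.+1)),
    \sum_(k < m) \sum_(i in R k) F k i = \sum_i F (kof i) i.
  move=> F; rewrite (partition_big kof xpredT) //=.
  apply: eq_bigr => k _; apply: eq_big => [i|i]; first by rewrite kofP.
  by rewrite kofP => /eqP ->.
pose b i := a (s (kof i)) i.
pose B := \matrix_(i < n) b i.
have BE : forall c : 'I_n -> K,
    \sum_(k < m) \sum_(i in R k) c i *: a (s k) i = (\row_i c i) *m B.
  move=> c; rewrite sumE mulmx_sum_row; apply: eq_bigr => i _.
  by rewrite rowK mxE.
set v := xv xs.
have Bv : B *m v = 0.
  apply/row_matrixP => i; rewrite row_mul rowK row0.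
  apply/rowP => j; rewrite (ord1 j) ahatE mxE /b.
  by apply: Hs; rewrite kofP.
set t := r k0.
have av : a t i0 *m v = 0.
  by apply/rowP => j; rewrite (ord1 j) ahatE mxE; apply: Hr.
pose C := col_mx B (a t i0).
have Cv : C *m v = 0 by rewrite mul_col_mx Bv av col_mx0.
have nfC : ~~ row_free C.
  apply/negP => fC.
  have : ~~ row_free C^T.
    apply/negP => fCt.
    have : v^T *m C^T == 0 by rewrite -trmx_mul Cv trmx0.
    by rewrite mulmx_free_eq0 // trmx_eq0 (negbTE (xv_neq0 xs)).
  by rewrite /row_free mxrank_tr; move: fC; rewrite /row_free => /eqP ->;
     rewrite addn1 eqxx.
have [w w0 wC] : exists2 w : 'rV_(n + 1), w != 0 & w *m C = 0.
  move: nfC; rewrite -kermx_eq0 => /eqP Hk.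
  case: (pickP (fun p : 'I_(n + 1) * 'I_(n + 1) => kermx C p.1 p.2 != 0)) =>
    [[i j] /= Hij | H].
    exists (row i (kermx C)).
      apply/eqP => /rowP /(_ j) Hw; move: Hij; have -> : kermx C i j = row i (kermx C) 0 j by rewrite [RHS]mxE.
      by rewrite Hw [X in X != 0]mxE eqxx.
    by rewrite -row_mul mulmx_ker row0.
  exfalso; apply: Hk; apply/matrixP => i j.
  by move: (H (i, j)) => /negbFE /eqP ->; rewrite mxE.
move: w0 wC; rewrite -(hsubmxK w) mul_row_col.
set w1 := lsubmx w; set w2 := rsubmx w => w0 wC.
rewrite [w2]mx11_scalar mul_scalar_mx in wC.
case: (eqVneq (w2 0 0) 0) => Ha.
  rewrite Ha scale0r addr0 in wC.
  have := Hindep s (fun i => w1 0 i); rewrite /family_lin_indep BE.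
  have -> : \row_i w1 0 i = w1 by apply/rowP => j; rewrite mxE.
  move=> /(_ wC) H1.
  have e1 : w1 = 0 by apply/rowP => j; rewrite H1 mxE.
  have e2 : w2 = 0 by apply/rowP => j; rewrite ord1 Ha mxE.
  by move: w0; rewrite e1 e2 row_mx0 eqxx.
apply: (Hspan s k0 i0 t Hi0); first by rewrite eq_sym.
exists (fun i => - (w2 0 0)^-1 * w1 0 i); rewrite BE.
have -> : \row_i (- (w2 0 0)^-1 * w1 0 i) = - (w2 0 0)^-1 *: w1.
  by apply/rowP => j; rewrite !mxE.
have e : w1 *m B = - (w2 0 0 *: a t i0) by apply/eqP; rewrite -addr_eq0 wC.
by rewrite -scalemxAl e scalerN scaleNr opprK scalerA mulVf // scale1r.
Qed.
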